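(* Let $G_{\lambda,k}$ be a skeleton of a connected graph $G$ with natural map $f$, and let $P_1,P_2$ be paths in $G_{\lambda,k}$ such that $d(u,v)>1$ for all vertices $u\in P_1$, $v\in P_2$. Then, for $M=\min\{\lambda,k\}$, $N_{M/2}(f^{-1}(P_1))\cap N_{M/2}(f^{-1}(P_2))=\emptyset$.
   Context: $d$ is the graph metric. $N_r(S)=\{y: d(s,y)<r\text{ for some } s\in S\}$ (in $G$). A set $X$ is $k$-connected if any two of its points are joined by a finite sequence in $X$ with consecutive distances $\le k$. Skeleton $G_{\lambda,k}$ (root $x_0\in V(G)$, scale $\lambda\ge1$, connectivity $k\ge1$): layers $A_{N,\lambda}=\{x: N\lambda<d(x,x_0)\le(N+1)\lambda\}$, $N\in\mathbb Z$; blocks are the maximal $k$-connected subsets of layers; $G_{\lambda,k}$ has a vertex per block and an edge between two blocks iff an edge of $G$ joins them. The natural map $f$ sends each vertex of $G$ to its block; $f^{-1}(P)$ is the union of the blocks that are vertices of $P$. *)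

(* Defs.v *)
From Stdlib Require Import Reals List ZArith ClassicalEpsilon.
Import ListNotations.
Open Scope R_scope.

Section Graphs.
Context {T : Type} (adj : T -> T -> Prop).

Inductive walkn : T -> T -> nat -> Prop :=
| walk0 x : walkn x x 0
| walkS x y z n : adj x y -> walkn y z n -> walkn x z (S n).

(* graph distance: the least length of a walk (meaningful for connected graphs) *)
Definition gdist (x y : T) : nat :=
  epsilon (inhabits 0%nat)
    (fun n => walkn x y n /\ forall m, walkn x y m -> (n <= m)%nat).

Definition connected_graph : Prop := forall x y, exists n, walkn x y n.

Fixpoint chain (p : list T) : Prop :=
  match p with
  | x :: ((y :: _) as t) => adj x y /\ chain t
  | _ => True
  end.

Definition is_path (p : list T) : Prop := p <> [] /\ NoDup p /\ chain p.

Definition nbhd (S : T -> Prop) (r : R) (y : T) : Prop :=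
  exists s, S s /\ INR (gdist s y) < r.
End Graphs.

Section Skeleton.
Context {V : Type} (adj : V -> V -> Prop) (x0 : V) (lam k : R).

Definition layer (N : Z) (x : V) : Prop :=
  IZR N * lam < INR (gdist adj x x0) <= (IZR N + 1) * lam.

Inductive kseq (X : V -> Prop) : V -> V -> Prop :=
| kseq0 a : X a -> kseq X a a
| kseqS a b c : X a -> INR (gdist adj a b) <= k -> kseq X b c -> kseq X a c.

Definition k_connected (X : V -> Prop) : Prop :=
  forall a b, X a -> X b -> kseq X a b.

Definition is_block (B : V -> Prop) : Prop :=
  exists N : Z,
    (forall x, B x -> layer N x) /\ (exists x, B x) /\ k_connected B /\
    (forall C : V -> Prop, (forall x, B x -> C x) -> (forall x, C x -> layer N x) ->
        k_connected C -> forall x, C x -> B x).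

(* vertices of the skeleton G_{lambda,k} *)
Definition block : Type := { B : V -> Prop | is_block B }.

Definition sk_adj (b1 b2 : block) : Prop :=
  b1 <> b2 /\ exists x y, proj1_sig b1 x /\ proj1_sig b2 y /\ adj x y.

(* f^{-1}(P): union of the blocks that are vertices of P *)
Definition preim (P : list block) (x : V) : Prop :=
  exists b, In b P /\ proj1_sig b x.
End Skeleton.

(* Main.v *)
Require Import Defs.
From Stdlib Require Import Reals List ZArith Lra Lia Classical ClassicalEpsilon FunctionalExtensionality PropExtensionality ProofIrrelevance.
Open Scope R_scope.

Lemma least_ex (P : nat -> Prop) n : P n -> exists m, P m /\ forall j, P j -> (m <= j)%nat.
Proof.
  intros Hn. destruct (classic (exists m, P m /\ forall j, P j -> (m <= j)%nat)) as [H|H]; auto.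
  exfalso. assert (forall q, ~ P q) as A.
  { intros q. induction q as [q IH] using (well_founded_induction lt_wf).
    intros Pq. apply H. exists q. split; auto. intros j Pj.
    destruct (le_lt_dec q j); auto. exfalso; exact (IH j l Pj). }
  exact (A n Hn).
Qed.

Section G.
Context {T : Type} (adj : T -> T -> Prop).

Lemma gdist_spec x y n : walkn adj x y n ->
  walkn adj x y (gdist adj x y) /\ forall m, walkn adj x y m -> (gdist adj x y <= m)%nat.
Proof.
  intros W. unfold gdist. apply epsilon_spec.
  exact (least_ex (fun m => walkn adj x y m) n W).
Qed.

Lemma gdist_le x y n : walkn adj x y n -> (gdist adj x y <= n)%nat.
Proof. intros W. apply (proj2 (gdist_spec x y n W)); auto. Qed.

Lemma walk_cat x y z n m : walkn adj x y n -> walkn adj y z m -> walkn adj x z (n + m).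
Proof. induction 1; intros; simpl; auto. econstructor; eauto. Qed.

Lemma walk_snoc x y z n : walkn adj x y n -> adj y z -> walkn adj x z (S n).
Proof. intros W A. replace (S n) with (n + 1)%nat by lia. apply walk_cat with y; auto.
  econstructor; eauto. constructor. Qed.

Hypothesis adj_sym : forall x y, adj x y -> adj y x.

Lemma walk_rev x y n : walkn adj x y n -> walkn adj y x n.
Proof. induction 1. constructor. eapply walk_snoc; eauto. Qed.

Hypothesis conn : connected_graph adj.

Lemma gdist_walk x y : walkn adj x y (gdist adj x y).
Proof. destruct (conn x y) as [n W]. apply (gdist_spec _ _ _ W). Qed.

Lemma gdist_sym x y : gdist adj x y = gdist adj y x.
Proof.
  apply Nat.le_antisymm; apply gdist_le; apply walk_rev; apply gdist_walk.
Qed.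

Lemma gdist_tri x y z : (gdist adj x z <= gdist adj x y + gdist adj y z)%nat.
Proof. apply gdist_le. apply walk_cat with y; apply gdist_walk. Qed.

Lemma gdist_adj x y : adj x y -> (gdist adj x y <= 1)%nat.
Proof. intros A. apply gdist_le. econstructor; eauto. constructor. Qed.

Lemma crossing (D : T -> R) (Th : R) a b n : walkn adj a b n -> D a <= Th -> Th < D b ->
  exists u v i j, walkn adj a u i /\ adj u v /\ walkn adj v b j /\ (i + 1 + j = n)%nat /\
    D u <= Th /\ Th < D v.
Proof.
  induction 1 as [x|x y z n A W IH]; intros Ha Hb.
  - lra.
  - destruct (Rlt_le_dec Th (D y)) as [H|H].
    + exists x, y, 0%nat, n. repeat split; auto; try constructor; lia.
    + destruct (IH H Hb) as (u & v & i & j & W1 & A2 & W2 & E & H1 & H2).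
      exists u, v, (S i), j. repeat split; auto. econstructor; eauto. lia.
Qed.
End G.
Section S.
Context {V : Type} (adj : V -> V -> Prop) (x0 : V) (lam k : R).
Hypothesis adj_sym : forall x y, adj x y -> adj y x.
Hypothesis conn : connected_graph adj.
Hypothesis Hlam : 1 <= lam.
Hypothesis Hk : 1 <= k.

Lemma layer_uniq N N' x : layer adj x0 lam N x -> layer adj x0 lam N' x -> N = N'.
Proof.
  unfold layer; intros [A B] [C D].
  assert (IZR N < IZR N' + 1).
  { apply Rmult_lt_reg_r with lam; lra. }
  assert (IZR N' < IZR N + 1).
  { apply Rmult_lt_reg_r with lam; lra. }
  rewrite <- plus_IZR in *. apply lt_IZR in H. apply lt_IZR in H0. lia.
Qed.

Lemma kseq_mono (X Y : V -> Prop) a b : (forall w, X w -> Y w) -> kseq adj k X a b -> kseq adj k Y a b.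
Proof. intros S. induction 1. constructor; auto. econstructor; eauto. Qed.

Lemma kseq_trans X a b c : kseq adj k X a b -> kseq adj k X b c -> kseq adj k X a c.
Proof. induction 1; intros; auto. econstructor; eauto. Qed.



Lemma absorb B N x z : is_block adj x0 lam k B -> B x -> layer adj x0 lam N x -> layer adj x0 lam N z ->
  INR (gdist adj x z) <= k -> B z.
Proof.
  intros [N' [HL [_ [Hc Hmax]]]] Bx Lx Lz Dz.
  assert (N = N') by (apply layer_uniq with x; auto). subst N'.
  set (C := fun w => B w \/ w = z).
  assert (Cx : forall a, C a -> kseq adj k C a x /\ kseq adj k C x a).
  { intros a [Ba | ->].
    - split; apply kseq_mono with B; try (intros; left; auto); apply Hc; auto.
    - split.
      + apply kseqS with x. right; auto. rewrite gdist_sym; auto.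
        constructor. left; auto.
      + apply kseqS with z. left; auto. auto. constructor. right; auto. }
  apply (Hmax C).
  - intros; left; auto.
  - intros w [Bw | ->]; auto.
  - intros a b Ca Cb. apply kseq_trans with x. apply (Cx a Ca). apply (Cx b Cb).
  - right; auto.
Qed.

Lemma block_eq (b1 b2 : block adj x0 lam k) z : proj1_sig b1 z -> proj1_sig b2 z -> b1 = b2.
Proof.
  destruct b1 as [B1 H1], b2 as [B2 H2]; simpl. intros z1 z2.
  assert (forall (B1 B2 : V -> Prop), is_block adj x0 lam k B1 -> is_block adj x0 lam k B2 ->
     B1 z -> B2 z -> forall w, B2 w -> B1 w) as Sub.
  { clear z1 z2 H1 H2 B1 B2. intros B1 B2 [N1 [L1 [_ [C1 M1]]]] [N2 [L2 [_ [C2 M2]]]] z1 z2.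
    assert (N1 = N2) by (apply layer_uniq with z; auto). subst N2.
    intros w0 Hw0. apply (M1 (fun w => B1 w \/ B2 w)); [ | | | right; exact Hw0].
    - intros; left; auto.
    - intros w [?|?]; auto.
    - intros a b Ca Cb. apply kseq_trans with z.
      + destruct Ca; [apply kseq_mono with B1|apply kseq_mono with B2]; try (intros; tauto);
          [apply C1|apply C2]; auto.
      + destruct Cb; [apply kseq_mono with B1|apply kseq_mono with B2]; try (intros; tauto);
          [apply C1|apply C2]; auto. }
  assert (B1 = B2).
  { apply functional_extensionality; intros w. apply propositional_extensionality.
    split; apply Sub; auto. }
  subst B2. f_equal. apply proof_irrelevance.
Qed.
End S.
Section S2.
Context {V : Type} (adj : V -> V -> Prop) (x0 : V) (lam k : R).
Hypothesis adj_sym : forall x y, adj x y -> adj y x.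
Hypothesis conn : connected_graph adj.
Hypothesis Hlam : 1 <= lam.
Hypothesis Hk : 1 <= k.

Lemma core_le (b1 b2 : block adj x0 lam k) x1 x2 N1 N2 :
  proj1_sig b1 x1 -> proj1_sig b2 x2 ->
  layer adj x0 lam N1 x1 -> layer adj x0 lam N2 x2 -> (N1 <= N2)%Z ->
  INR (gdist adj x1 x2) < Rmin lam k ->
  b1 = b2 \/ sk_adj adj x0 lam k b1 b2.
Proof.
  intros X1 X2 L1 L2 Hle Hd.
  assert (Hmk : Rmin lam k <= k) by apply Rmin_r.
  assert (Hml : Rmin lam k <= lam) by apply Rmin_l.
  destruct (Z.eq_dec N1 N2) as [<-|Hne].
  - left. apply block_eq with x2; auto.
    apply (absorb adj x0 lam k adj_sym conn Hlam (proj1_sig b1) N1 x1); auto. apply (proj2_sig b1). lra.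
  - right.
    set (D := fun x => INR (gdist adj x x0)).
    set (n := gdist adj x1 x2).
    pose proof (gdist_walk adj conn x1 x2) as W.
    unfold layer in L1, L2.
    assert (HN : (N1 + 1 <= N2)%Z) by lia.
    apply IZR_le in HN. rewrite plus_IZR in HN.
    assert (T1 : D x1 <= (IZR N1 + 1) * lam) by (unfold D; lra).
    assert (T2 : (IZR N1 + 1) * lam < D x2) by (unfold D; nra).
    destruct (crossing adj D _ _ _ _ W T1 T2) as (u & v & i & j & Wu & Auv & Wv & E & Hu & Hv).
    assert (Euv : (gdist adj v x0 <= gdist adj u x0 + 1)%nat).
    { pose proof (gdist_tri adj conn v u x0). pose proof (gdist_adj adj v u (adj_sym _ _ Auv)).
      rewrite (gdist_sym adj adj_sym conn v u) in *. lia. }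
    assert (Luv : (gdist adj u x0 < gdist adj v x0)%nat).
    { apply INR_lt. unfold D in Hu, Hv. lra. }
    assert (Ev : D v = D u + 1).
    { unfold D. rewrite <- S_INR. f_equal. lia. }
    assert (Ex2 : (gdist adj x2 x0 <= gdist adj x1 x0 + n)%nat).
    { pose proof (gdist_tri adj conn x2 x1 x0). unfold n.
      rewrite (gdist_sym adj adj_sym conn x2 x1) in *. lia. }
    apply le_INR in Ex2. rewrite plus_INR in Ex2.
    assert (N2E : N2 = (N1 + 1)%Z).
    { assert (IZR N2 < IZR N1 + 2).
      { apply Rmult_lt_reg_r with lam. lra. fold n in Hd. nra. }
      replace 2 with (IZR 2) in H by reflexivity. rewrite <- plus_IZR in H.
      apply lt_IZR in H. lia. }
    subst N2. rewrite plus_IZR in L2.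
    assert (Lu : layer adj x0 lam N1 u).
    { unfold layer. fold (D u). split; nra. }
    assert (Lv : layer adj x0 lam (N1 + 1) v).
    { unfold layer. fold (D v). rewrite plus_IZR. split; nra. }
    assert (Un : INR (gdist adj x1 u) <= INR n).
    { apply le_INR. pose proof (gdist_le adj _ _ _ Wu). lia. }
    assert (Vn : INR (gdist adj x2 v) <= INR n).
    { apply le_INR. pose proof (gdist_le adj _ _ _ Wv).
      rewrite (gdist_sym adj adj_sym conn x2 v). lia. }
    fold n in Hd.
    assert (Bu : proj1_sig b1 u).
    { apply (absorb adj x0 lam k adj_sym conn Hlam (proj1_sig b1) N1 x1); auto. apply (proj2_sig b1). lra. }
    assert (Bv : proj1_sig b2 v).
    { apply (absorb adj x0 lam k adj_sym conn Hlam (proj1_sig b2) (N1 + 1)%Z x2); auto. apply (proj2_sig b2).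
      unfold layer; rewrite plus_IZR; auto. lra. }
    split.
    + intros ->. destruct (proj2_sig b2) as [N [HL _]].
      pose proof (layer_uniq adj x0 lam Hlam _ _ _ (HL u Bu) Lu).
      pose proof (layer_uniq adj x0 lam Hlam _ _ _ (HL v Bv) Lv).
      lia.
    + exists u, v. auto.
Qed.

Lemma core (b1 b2 : block adj x0 lam k) x1 x2 :
  proj1_sig b1 x1 -> proj1_sig b2 x2 ->
  INR (gdist adj x1 x2) < Rmin lam k ->
  b1 = b2 \/ sk_adj adj x0 lam k b1 b2.
Proof.
  intros X1 X2 Hd.
  destruct (proj2_sig b1) as [N1 [HL1 _]]. destruct (proj2_sig b2) as [N2 [HL2 _]].
  destruct (Z.le_ge_cases N1 N2).
  - eapply core_le; eauto.
  - assert (Hd' : INR (gdist adj x2 x1) < Rmin lam k) by (rewrite gdist_sym; auto).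
    assert (HLx1 := HL1 x1 X1). assert (HLx2 := HL2 x2 X2).
    destruct (core_le b2 b1 x2 x1 N2 N1 X2 X1 HLx2 HLx1 ltac:(lia) Hd') as [E|A].
    + left; auto.
    + right. destruct A as [Ne [x [y [Hx [Hy Ha]]]]]. split; auto.
      exists y, x; auto.
Qed.
End S2.

Theorem corollary8 (V : Type) (adj : V -> V -> Prop)
  (adj_sym : forall x y, adj x y -> adj y x)
  (adj_irr : forall x, ~ adj x x)
  (Gconn : connected_graph adj)
  (x0 : V) (lam k : R) (Hlam : 1 <= lam) (Hk : 1 <= k)
  (P1 P2 : list (block adj x0 lam k))
  (HP1 : is_path (sk_adj adj x0 lam k) P1)
  (HP2 : is_path (sk_adj adj x0 lam k) P2)
  (Hfar : forall u v, In u P1 -> In v P2 ->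
            (1 < gdist (sk_adj adj x0 lam k) u v)%nat) :
  let M := Rmin lam k in
  forall y : V,
    ~ (nbhd adj (preim adj x0 lam k P1) (M / 2) y /\
       nbhd adj (preim adj x0 lam k P2) (M / 2) y).
Proof.
  intros M y [[s1 [[b1 [Hb1 Hs1]] Hd1]] [s2 [[b2 [Hb2 Hs2]] Hd2]]].
  pose proof (Hfar b1 b2 Hb1 Hb2) as F.
  assert (Hd : INR (gdist adj s1 s2) < M).
  { pose proof (gdist_tri adj Gconn s1 y s2).
    rewrite (gdist_sym adj adj_sym Gconn y s2) in H.
    apply le_INR in H. rewrite plus_INR in H. lra. }
  destruct (core adj x0 lam k adj_sym Gconn Hlam b1 b2 s1 s2 Hs1 Hs2 Hd) as [E|A].
  - subst b2. pose proof (gdist_le _ _ _ _ (walk0 (sk_adj adj x0 lam k) b1)). lia.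
  - assert (W : walkn (sk_adj adj x0 lam k) b1 b2 1).
    { econstructor; eauto. constructor. }
    pose proof (gdist_le _ _ _ _ W). lia.
Qed.
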